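(* Fix $n\ge 1$ and a formula $\varphi$ in the variables $x_1,\dots,x_n$. Let $O(\varphi,n)$ be the set of Boolean assignments $\mu$ of $x_1,\dots,x_n$ to values in $\{0,1\}$ (extended to formulas by evaluation in the two-element NM chain) such that $\mu(\varphi)=1$. Then there is a bijection between $O(\varphi,n)$ and the set of minimal idempotent join-irreducible elements $g\in\mathcal{NM}^-_n$ such that $g\le[\varphi]_\equiv$.
   Context: An NM algebra is an algebra $\langle A,\wedge,\vee,\odot,\to,\bot,\top\rangle$ such that $(A,\wedge,\vee,\bot,\top)$ is a bounded lattice, $\langle A,\odot,\top\rangle$ is a commutative monoid, and for all $x,y,z$: $x\odot y\le z$ iff $x\le y\to z$; $(x\to y)\vee(y\to x)=\top$; $\neg(x\odot y)\vee((x\wedge y)\to(x\odot y))=\top$ where $\neg x:=x\to\bot$; and $\neg\neg x=x$. An NM$^-$ algebra is an NM algebra additionally satisfying $\neg(\neg x^2)^2\leftrightarrow(\neg(\neg x)^2)^2=\top$, where $y^2:=y\odot y$ and $u\leftrightarrow v:=(u\to v)\odot(v\to u)$. The two-element chain $\{0,1\}$ with Boolean operations ($\odot=\wedge$) is an NM$^-$ algebra. $\mathcal{NM}^-_n$ is the free NM$^-$ algebra on $n$ generators, i.e. the Lindenbaum algebra of formulas in $x_1,\dots,x_n$ modulo equivalence in the logic NM$^-$ (validity of $\varphi\leftrightarrow\psi$ in all NM$^-$ algebras); $[\varphi]_\equiv$ is the class of $\varphi$. It is a finite distributive lattice. An element is join-irreducible if it is not $\bot$ and $x=y\vee z$ implies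 $x=y$ or $x=z$; idempotent if $g\odot g=g$; a minimal idempotent join-irreducible element is one minimal among idempotent join-irreducible elements. *)

(* Defs.v *)
From mathcomp Require Import all_boot.
Set Implicit Arguments. Unset Strict Implicit. Unset Printing Implicit Defensive.

Record nmAlgebra := NMAlgebra {
  car :> Type;
  nm_meet : car -> car -> car;
  nm_join : car -> car -> car;
  nm_mul  : car -> car -> car;
  nm_imp  : car -> car -> car;
  nm_bot  : car;
  nm_top  : car;
  meetC : forall x y, nm_meet x y = nm_meet y x;
  joinC : forall x y, nm_join x y = nm_join y x;
  meetA : forall x y z, nm_meet x (nm_meet y z) = nm_meet (nm_meet x y) z;
  joinA : forall x y z, nm_join x (nm_join y z) = nm_join (nm_join x y) z;
  meet_absorb : forall x y, nm_meet x (nm_join x y) = x;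
  join_absorb : forall x y, nm_join x (nm_meet x y) = x;
  join_bot : forall x, nm_join x nm_bot = x;
  meet_top : forall x, nm_meet x nm_top = x;
  mulC : forall x y, nm_mul x y = nm_mul y x;
  mulA : forall x y z, nm_mul x (nm_mul y z) = nm_mul (nm_mul x y) z;
  mul_top : forall x, nm_mul x nm_top = x;
  (* residuation, w.r.t. the lattice order x <= y :<-> x /\ y = x *)
  residuation : forall x y z,
    nm_meet (nm_mul x y) z = nm_mul x y <-> nm_meet x (nm_imp y z) = x;
  prelinearity : forall x y, nm_join (nm_imp x y) (nm_imp y x) = nm_top;
  nm_axiom : forall x y,
    nm_join (nm_imp (nm_mul x y) nm_bot) (nm_imp (nm_meet x y) (nm_mul x y)) = nm_top;
  involution : forall x, nm_imp (nm_imp x nm_bot) nm_bot = x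
}.

Definition nm_neg (A : nmAlgebra) (x : A) : A := nm_imp x (nm_bot A).
Definition nm_sq (A : nmAlgebra) (x : A) : A := nm_mul x x.
Definition nm_biimp (A : nmAlgebra) (u v : A) : A := nm_mul (nm_imp u v) (nm_imp v u).

Definition is_NMminus (A : nmAlgebra) : Prop :=
  forall x : A,
    nm_biimp (nm_neg (nm_sq (nm_neg (nm_sq x))))
             (nm_sq (nm_neg (nm_sq (nm_neg x)))) = nm_top A.

Inductive formula (n : nat) : Type :=
| Var  : 'I_n -> formula n
| Bot  : formula n
| Top  : formula n
| Meet : formula n -> formula n -> formula n
| Join : formula n -> formula n -> formula n
| Mul  : formula n -> formula n -> formula n
| Imp  : formula n -> formula n -> formula n.

Arguments Bot {n}.
Arguments Top {n}.

Fixpoint eval (n : nat) (A : nmAlgebra) (v : 'I_n -> A) (f : formula n) : A :=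
  match f with
  | Var i => v i
  | Bot => nm_bot A
  | Top => nm_top A
  | Meet f g => nm_meet (eval v f) (eval v g)
  | Join f g => nm_join (eval v f) (eval v g)
  | Mul f g => nm_mul (eval v f) (eval v g)
  | Imp f g => nm_imp (eval v f) (eval v g)
  end.

Definition Biimp (n : nat) (f g : formula n) : formula n := Mul (Imp f g) (Imp g f).

(* Evaluation in the two-element NM chain {0,1} with Boolean operations (⊙ = ∧) *)
Fixpoint bool_eval (n : nat) (mu : 'I_n -> bool) (f : formula n) : bool :=
  match f with
  | Var i => mu i
  | Bot => false
  | Top => true
  | Meet f g => bool_eval mu f && bool_eval mu g
  | Join f g => bool_eval mu f || bool_eval mu g
  | Mul f g => bool_eval mu f && bool_eval mu g
  | Imp f g => bool_eval mu f ==> bool_eval mu g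
  end.

(* ---------- the Lindenbaum algebra NM^-_n, via representatives ---------- *)
Definition nmeq (n : nat) (f g : formula n) : Prop :=
  forall (A : nmAlgebra), is_NMminus A ->
    forall v : 'I_n -> A, eval v (Biimp f g) = nm_top A.

Definition nmle (n : nat) (f g : formula n) : Prop := nmeq (Meet f g) f.

Definition join_irreducible (n : nat) (g : formula n) : Prop :=
  ~ nmeq g Bot /\
  forall y z : formula n, nmeq g (Join y z) -> nmeq g y \/ nmeq g z.

Definition idempotent (n : nat) (g : formula n) : Prop := nmeq (Mul g g) g.

Definition idem_ji (n : nat) (g : formula n) : Prop :=
  idempotent g /\ join_irreducible g.

Definition min_idem_ji (n : nat) (g : formula n) : Prop :=
  idem_ji g /\ forall h : formula n, idem_ji h -> nmle h g -> nmeq h g.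

(* Main.v *)
Require Import Defs.
From mathcomp Require Import all_boot.
Set Implicit Arguments. Unset Strict Implicit. Unset Printing Implicit Defensive.

Section NM.
Variable A : nmAlgebra.
Implicit Types x y z : A.
Local Notation mt := (@nm_meet A).
Local Notation jn := (@nm_join A).
Local Notation ml := (@nm_mul A).
Local Notation im := (@nm_imp A).
Local Notation bt := (nm_bot A).
Local Notation tp := (nm_top A).

Definition le x y := mt x y = x.

Lemma meetxx x : mt x x = x.
Proof. by have := meet_absorb x (mt x x); rewrite join_absorb. Qed.
Lemma le_refl x : le x x. Proof. exact: meetxx. Qed.
Lemma le_anti x y : le x y -> le y x -> x = y.
Proof. by rewrite /le => h1 h2; rewrite -h1 meetC h2. Qed.
Lemma le_trans x y z : le x y -> le y z -> le x z.
Proof. rewrite /le => h1 h2; by rewrite -{1}h1 -meetA h2 h1. Qed.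
Lemma le_meetl x y : le (mt x y) x.
Proof. by rewrite /le meetC meetA meetxx. Qed.
Lemma le_meetr x y : le (mt x y) y.
Proof. by rewrite meetC; apply: le_meetl. Qed.
Lemma le_meet z x y : le z x -> le z y -> le z (mt x y).
Proof. rewrite /le => h1 h2; by rewrite meetA h1 h2. Qed.
Lemma le_top x : le x tp. Proof. exact: meet_top. Qed.
Lemma le_joinl x y : le x (jn x y). Proof. exact: meet_absorb. Qed.
Lemma le_join_iff x y : le x y <-> jn x y = y.
Proof.
split=> h.
  by rewrite -{1}h joinC meetC join_absorb.
by rewrite /le -h meet_absorb.
Qed.
Lemma le_joinr x y : le y (jn x y). Proof. by rewrite joinC; apply: le_joinl. Qed.
Lemma le_bot x : le bt x. Proof. by apply/le_join_iff; rewrite joinC join_bot. Qed.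
Lemma le_join x y z : le x z -> le y z -> le (jn x y) z.
Proof. move=> /le_join_iff h1 /le_join_iff h2; apply/le_join_iff; by rewrite -joinA h2 h1. Qed.

Lemma ml_monol x y z : le x y -> le (ml x z) (ml y z).
Proof.
move=> h; have: le (ml y z) (ml y z) by apply: le_refl.
move/residuation => h2; apply/residuation; exact: le_trans h h2.
Qed.
Lemma ml_mono x y x' y' : le x x' -> le y y' -> le (ml x y) (ml x' y').
Proof.
move=> h1 h2; apply: le_trans (ml_monol y h1) _.
rewrite (mulC x' y) (mulC x' y'); exact: ml_monol.
Qed.
Lemma ml_lel x y : le (ml x y) x.
Proof. rewrite -{2}(mul_top x); apply: ml_mono; [apply: le_refl|apply: le_top]. Qed.
Lemma ml_ler x y : le (ml x y) y.
Proof. rewrite mulC; exact: ml_lel. Qed.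
Lemma le_botE x : le x bt -> x = bt.
Proof. by move=> h; apply: le_anti h (le_bot _). Qed.
Lemma le_topE x : le tp x -> x = tp.
Proof. by move=> h; apply: le_anti (le_top _) h. Qed.
Lemma ml_bot x : ml x bt = bt.
Proof. exact: le_botE (ml_ler _ _). Qed.
Lemma imp_ev x y : le (ml (im x y) x) y.
Proof. apply/residuation; exact: le_refl. Qed.
Lemma le_negP k y : le k (im y bt) <-> ml k y = bt.
Proof.
split.
  by move/residuation/le_botE.
by move=> h; apply/residuation; rewrite h; apply: le_refl.
Qed.
Lemma distr x y z : ml x (jn y z) = jn (ml x y) (ml x z).
Proof.
apply: le_anti.
  rewrite mulC; apply/residuation; apply: le_join; apply/residuation; rewrite mulC.
    exact: le_joinl.
  exact: le_joinr.
apply: le_join; apply: ml_mono; (try apply: le_refl); [apply: le_joinl|apply: le_joinr].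
Qed.
Lemma imp_top x y : im x y = tp <-> le x y.
Proof.
split.
  move=> h; have: le tp (im x y) by rewrite h; apply: le_refl.
  by move/residuation; rewrite mulC mul_top.
move=> h; apply: le_topE; apply/residuation; by rewrite mulC mul_top.
Qed.
Lemma biimp_eq x y : ml (im x y) (im y x) = tp -> x = y.
Proof.
move=> h; apply: le_anti; apply/imp_top; apply: le_topE; rewrite -h;
  [exact: ml_lel | exact: ml_ler].
Qed.
Lemma eq_biimp x : ml (im x x) (im x x) = tp.
Proof. by have /imp_top -> := le_refl x; rewrite mul_top. Qed.

Definition idem x := ml x x = x.

Lemma sq_idem x : idem (ml x x).
Proof.
have ax := nm_axiom x x; rewrite meetxx in ax.
set a := ml x x.
have h1 : le a (ml x a).
  rewrite -{1}(mul_top a) -ax distr (mulC a (im a bt)).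
  have -> : ml (im a bt) a = bt by apply/le_negP; apply: le_refl.
  rewrite joinC join_bot /a -mulA; apply: ml_mono; first exact: le_refl.
  rewrite mulC; exact: imp_ev.
apply: le_anti; first exact: ml_lel.
apply: le_trans (h1) _.
have -> : ml a a = ml x (ml x a) by rewrite /a -mulA.
apply: ml_mono; first exact: le_refl.
exact: h1.
Qed.

Lemma idem_mul a b : idem a -> idem b -> idem (ml a b).
Proof.
rewrite /idem => ha hb.
rewrite -mulA (mulA b a b) (mulC b a) -mulA mulA ha hb //.
Qed.

Lemma idem_le a x y : idem a -> le a x -> le a y -> le a (ml x y).
Proof. move=> ha h1 h2; rewrite -ha; exact: ml_mono. Qed.

Lemma nmminus_kill k y : is_NMminus A -> idem k ->
  ml k (ml y y) = bt -> ml k (ml (im y bt) (im y bt)) = bt -> k = bt.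
Proof.
move=> HA hk h1 h2.
have e := biimp_eq (HA y); rewrite /nm_neg /nm_sq in e.
move/le_negP: h1 => h1; move/le_negP: h2 => h2.
have hf := idem_le hk h1 h1.
have he := idem_le hk h2 h2.
rewrite -e in he.
move/le_negP: he => he.
apply: le_botE; rewrite -hk -he; apply: ml_mono; [exact: le_refl| exact: hf].
Qed.

End NM.

Definition BoolNM : nmAlgebra.
Proof.
refine (@NMAlgebra bool andb orb andb implb false true _ _ _ _ _ _ _ _ _ _ _ _ _ _ _).
all: try by do ![case].
all: by do 3!case; split.
Defined.

Lemma BoolNM_minus : is_NMminus BoolNM.
Proof. by case. Qed.

Lemma eval_bool n (v : 'I_n -> bool) (f : formula n) :
  @eval n BoolNM v f = bool_eval v f.
Proof. by elim: f => //= f -> g ->. Qed.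

Lemma nmeqP n (f g : formula n) : nmeq f g <->
  forall A, is_NMminus A -> forall v : 'I_n -> A, eval v f = eval v g.
Proof.
split=> h A HA v.
  by apply: biimp_eq; apply: h.
by rewrite /= (h A HA v); apply: eq_biimp.
Qed.

Section F.
Variable n : nat.

Definition lit (mu : 'I_n -> bool) i : formula n :=
  if mu i then Mul (Var i) (Var i) else Mul (Imp (Var i) Bot) (Imp (Var i) Bot).
Definition gs (mu : 'I_n -> bool) (s : seq 'I_n) : formula n :=
  foldr (fun i acc => Mul (lit mu i) acc) Top s.
Definition gF mu := gs mu (enum 'I_n).

Lemma gs_eq mu mu' s : {in s, mu =1 mu'} -> gs mu s = gs mu' s.
Proof.
elim: s => //= i s IH h; rewrite IH; last by move=> j js; apply: h; rewrite inE js orbT.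
by rewrite /lit h // inE eqxx.
Qed.

Lemma gs_idem (A : nmAlgebra) (v : 'I_n -> A) mu s : idem (eval v (gs mu s)).
Proof.
elim: s => [|i s IH] /=; first exact: mul_top.
apply: idem_mul => //; rewrite /lit; case: (mu i) => /=; exact: sq_idem.
Qed.

Lemma gs_le_lit (A : nmAlgebra) (v : 'I_n -> A) mu s i : i \in s -> le (eval v (gs mu s)) (eval v (lit mu i)).
Proof.
elim: s => //= j s IH; rewrite inE => /orP [/eqP -> | /IH h].
  exact: ml_lel.
exact: le_trans (ml_ler _ _) h.
Qed.

Lemma dichotomy (A : nmAlgebra) (v : 'I_n -> A) mu (psi : formula n) :
  let G := eval v (gF mu) in
  if bool_eval mu psi then le G (eval v psi) else nm_mul G (eval v psi) = nm_bot A.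
Proof.
move=> G.
have hG : idem G by apply: gs_idem.
have hl : forall i, le G (eval v (lit mu i)) by move=> i; apply: gs_le_lit; rewrite mem_enum.
elim: psi => [i | | | p1 IH1 p2 IH2 | p1 IH1 p2 IH2 | p1 IH1 p2 IH2 | p1 IH1 p2 IH2] /=.
- have := hl i; rewrite /lit; case: (mu i) => /= h.
    exact: le_trans h (ml_lel _ _).
  apply/le_negP; exact: le_trans h (ml_lel _ _).
- exact: ml_bot.
- exact: le_top.
- case: (bool_eval mu p1) IH1; case: (bool_eval mu p2) IH2 => /= h2 h1.
  + exact: le_meet.
  + apply: le_botE; rewrite -h2; apply: ml_mono; [exact: le_refl | exact: le_meetr].
  + apply: le_botE; rewrite -h1; apply: ml_mono; [exact: le_refl | exact: le_meetl].
  + apply: le_botE; rewrite -h1; apply: ml_mono; [exact: le_refl | exact: le_meetl].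
- case: (bool_eval mu p1) IH1; case: (bool_eval mu p2) IH2 => /= h2 h1.
  + exact: le_trans h1 (le_joinl _ _).
  + exact: le_trans h1 (le_joinl _ _).
  + exact: le_trans h2 (le_joinr _ _).
  + by rewrite distr h1 h2 join_bot.
- case: (bool_eval mu p1) IH1; case: (bool_eval mu p2) IH2 => /= h2 h1.
  + exact: idem_le.
  + apply: le_botE; rewrite -h2; apply: ml_mono; [exact: le_refl | exact: ml_ler].
  + apply: le_botE; rewrite -h1; apply: ml_mono; [exact: le_refl | exact: ml_lel].
  + apply: le_botE; rewrite -h1; apply: ml_mono; [exact: le_refl | exact: ml_lel].
- case: (bool_eval mu p1) IH1; case: (bool_eval mu p2) IH2 => /= h2 h1.
  + apply/residuation; exact: le_trans (ml_lel _ _) h2.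
  + apply: le_botE; rewrite -h2 -{1}hG -mulA; apply: ml_mono; first exact: le_refl.
    apply: le_trans (ml_monol _ h1) _; rewrite mulC; exact: imp_ev.
  + apply/residuation; rewrite h1; exact: le_bot.
  + apply/residuation; rewrite h1; exact: le_bot.
Qed.

Lemma bool_gs (w mu : 'I_n -> bool) s :
  bool_eval w (gs mu s) = all (fun i => w i == mu i) s.
Proof.
elim: s => //= i s ->; congr (_ && _); rewrite /lit.
by case: (mu i) => /=; case: (w i).
Qed.

Lemma kill (A : nmAlgebra) (HA : is_NMminus A) (v : 'I_n -> A) (s : seq 'I_n) (k : A) :
  uniq s -> idem k ->
  (forall mu : 'I_n -> bool, nm_mul k (eval v (gs mu s)) = nm_bot A) -> k = nm_bot A.
Proof.
elim: s k => [|i s IH] k /=.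
  by move=> _ _ h; rewrite -(h (fun _ => true)) mul_top.
case/andP=> nis us hk h; apply: IH => // mu.
set mu1 := fun b j => if j == i then b else mu j.
have E : forall b, gs (mu1 b) s = gs mu s.
  move=> b; apply: gs_eq => j js; rewrite /mu1; case: eqP => // ji.
  by move: nis; rewrite -ji js.
apply: (@nmminus_kill _ _ (v i) HA).
- by apply: idem_mul => //; apply: gs_idem.
- have := h (mu1 true); rewrite E /lit /mu1 eqxx /=.
  by move=> <-; rewrite -mulA (mulC (eval v _)).
- have := h (mu1 false); rewrite E /lit /mu1 eqxx /=.
  by move=> H; rewrite -mulA (mulC (eval v _)).
Qed.

Lemma gF_true (mu : 'I_n -> bool) : bool_eval mu (gF mu) = true.
Proof. by rewrite bool_gs; apply/allP => i _. Qed.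

Lemma gF_idem_ji (mu : 'I_n -> bool) : idem_ji (gF mu).
Proof.
split.
  apply/nmeqP => A HA v /=; exact: gs_idem.
split.
  move/nmeqP => h; have := h BoolNM BoolNM_minus mu.
  by rewrite eval_bool gF_true.
move=> y z /nmeqP h.
have := h BoolNM BoolNM_minus mu; rewrite !eval_bool /= gF_true.
case Hy: (bool_eval mu y) => /= Hz.
  left; apply/nmeqP => A HA v; apply: le_anti.
    by have := dichotomy v mu y; rewrite Hy.
  rewrite (h A HA v) /=; exact: le_joinl.
right; apply/nmeqP => A HA v; apply: le_anti.
  by have := dichotomy v mu z; rewrite -Hz.
rewrite (h A HA v) /=; exact: le_joinr.
Qed.

Lemma gF_min (mu : 'I_n -> bool) : min_idem_ji (gF mu).
Proof.
split; first exact: gF_idem_ji.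
move=> h [hid [hnz _]] /nmeqP hle.
case Hh: (bool_eval mu h).
  apply/nmeqP => A HA v; apply: le_anti.
    exact: (hle A HA v).
  by have := dichotomy v mu h; rewrite Hh.
exfalso; apply: hnz; apply/nmeqP => A HA v /=.
have d := dichotomy v mu h; rewrite Hh in d.
have hi : idem (eval v h) by apply: (proj1 (nmeqP _ _) hid A HA v).
apply: le_botE; rewrite -hi -d; apply: ml_monol; exact: (hle A HA v).
Qed.
End F.

Theorem lemma7 (n : nat) (hn : 0 < n) (phi : formula n) :
  exists F : {ffun 'I_n -> bool} -> formula n,
    (forall mu : {ffun 'I_n -> bool}, bool_eval mu phi = true ->
       min_idem_ji (F mu) /\ nmle (F mu) phi) /\
    (forall mu1 mu2 : {ffun 'I_n -> bool}, bool_eval mu1 phi = true -> bool_eval mu2 phi = true ->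
       nmeq (F mu1) (F mu2) -> mu1 = mu2) /\
    (forall g : formula n, min_idem_ji g -> nmle g phi ->
       exists2 mu : {ffun 'I_n -> bool}, bool_eval mu phi = true & nmeq (F mu) g).
Proof.
exists (fun mu => gF mu); split; [|split].
- move=> mu hphi; split; first exact: gF_min.
  apply/nmeqP => A HA v /=.
  by have := dichotomy v mu phi; rewrite hphi.
- move=> mu1 mu2 _ _ /nmeqP h.
  have := h BoolNM BoolNM_minus mu1; rewrite !eval_bool gF_true /gF bool_gs.
  move=> /esym/allP H.
  by apply/ffunP => i; apply/eqP; apply: H; rewrite mem_enum.
- move=> g gmin gle.
  case: (boolP [exists mu : {ffun 'I_n -> bool}, bool_eval mu g]) => [/existsP [mu Hmu] | Hno].
    exists mu.
      have := (proj1 (nmeqP _ _) gle) BoolNM BoolNM_minus mu.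
      by rewrite /= !eval_bool Hmu /= => ->.
    apply: (proj2 gmin) (gF_idem_ji mu) _.
    apply/nmeqP => A HA v /=.
    by have := dichotomy v mu g; rewrite Hmu.
  exfalso; case: gmin => [[gid [gnz _]] _].
  apply: gnz; apply/nmeqP => A HA v /=.
  apply: (@kill n A HA v (enum 'I_n) (eval v g) (enum_uniq _)).
    exact: (proj1 (nmeqP _ _) gid A HA v).
  move=> mu; set mu' := [ffun i => mu i].
  have Hf : bool_eval mu' g = false.
    by apply/negbTE; move/existsPn: Hno; apply.
  have := dichotomy v mu' g; rewrite Hf /gF (@gs_eq _ mu' mu) => [|i _]; last by rewrite ffunE.
  by rewrite mulC.
Qed.
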